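(* Let $\mathcal{F}$ be a fusion ring with structure constants $(N_{i,j}^k)$, index $1$ being the unit. Suppose there are indices $k_0\neq k_1$ such that $N_{i,j}^{k_0}\neq0$ and $N_{i,j}^{k_1}\neq0$ for all indices $i,j\neq1$. Then $\mathcal{F}$ passes the one spectrum criterion, i.e. there are no indices $i_0,i_1,\dots,i_9$ satisfying all of the following: (1) $N_{i_4,i_1}^{i_6},\ N_{i_5,i_4}^{i_2},\ N_{i_5,i_6}^{i_3},\ N_{i_7,i_9}^{i_1},\ N_{i_2,i_7}^{i_8},\ N_{i_8,i_9}^{i_3}\neq0$; (2) $\sum_kN_{i_4,i_7}^kN_{i_5^*,i_8}^kN_{i_6,i_9^*}^k=1$; (3) $N_{i_4,i_7}^{i_0}=N_{i_5^*,i_8}^{i_0}=N_{i_6,i_9^*}^{i_0}=1$; (4) $N_{i_2,i_1}^{i_3}=0$; (5) $\sum_kN_{i_5,i_4}^kN_{i_8,i_7^*}^k=1$ or $\sum_kN_{i_2,i_4^*}^kN_{i_8,i_0^*}^k=1$ or $\sum_kN_{i_5^*,i_2}^kN_{i_0,i_7^*}^k=1$; (6) $\sum_kN_{i_5,i_0}^kN_{i_3,i_9^*}^k=1$ or $\sum_kN_{i_8,i_0^*}^kN_{i_3,i_6^*}^k=1$ or $\sum_kN_{i_5^*,i_8}^kN_{i_6,i_9^*}^k=1$; (7) $\sum_kN_{i_4,i_7}^kN_{i_6,i_9^*}^k=1$ or $\sum_kN_{i_0,i_7^*}^kN_{i_6,i_1^*}^k=1$ or $\sum_kN_{i_4^*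,i_0}^kN_{i_1,i_9^*}^k=1$.
   Context: A fusion ring is a ring which is a free $\mathbb{Z}$-module with finite basis $\{b_1,\dots,b_r\}$, $b_ib_j=\sum_kN_{i,j}^kb_k$, $N_{i,j}^k\in\mathbb{Z}_{\ge0}$, associative, unit $b_1$, duality $i\mapsto i^*$ with $N_{i,k}^1=N_{k,i}^1=\delta_{i^*,k}$, and Frobenius reciprocity $N_{i,j}^k=N_{i^*,k}^j=N_{k,j^*}^i$. (If indices as in (1)–(7) exist, the fusion ring admits no categorification; ''passing the one spectrum criterion'' means no such indices exist.) *)

(* Defs.v *)
From mathcomp Require Import all_boot.
Set Implicit Arguments. Unset Strict Implicit. Unset Printing Implicit Defensive.

(* A fusion ring of rank r: basis indexed by 'I_r, structure constants
   N i j k = N_{i,j}^k (nonnegative integers), unit index [one],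
   duality [dual] (i |-> i^* ). *)
Definition is_fusion_ring (r : nat) (N : 'I_r -> 'I_r -> 'I_r -> nat)
    (one : 'I_r) (dual : 'I_r -> 'I_r) : Prop :=
  (* associativity of b_i b_j = sum_k N_{i,j}^k b_k *)
  [/\ (forall i j k l : 'I_r,
        \sum_(m < r) N i j m * N m k l = \sum_(m < r) N j k m * N i m l),
      (forall i j : 'I_r, N one i j = (i == j) /\ N i one j = (i == j)),
      (forall i k : 'I_r, N i k one = (dual i == k) /\ N k i one = (dual i == k))
    &
      (forall i j k : 'I_r,
        N i j k = N (dual i) k j /\ N i j k = N k (dual j) i)].

Definition sum2 r (N : 'I_r -> 'I_r -> 'I_r -> nat) (a b c d : 'I_r) : nat :=
  \sum_(k < r) N a b k * N c d k.

Definition sum3 r (N : 'I_r -> 'I_r -> 'I_r -> nat) (a b c d e f : 'I_r) : nat :=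
  \sum_(k < r) N a b k * N c d k * N e f k.

Definition one_spectrum_witness r (N : 'I_r -> 'I_r -> 'I_r -> nat)
    (dual : 'I_r -> 'I_r) (i0 i1 i2 i3 i4 i5 i6 i7 i8 i9 : 'I_r) : Prop :=
      (N i4 i1 i6 <> 0 /\ N i5 i4 i2 <> 0 /\ N i5 i6 i3 <> 0 /\
          N i7 i9 i1 <> 0 /\ N i2 i7 i8 <> 0 /\ N i8 i9 i3 <> 0) /\
      sum3 N i4 i7 (dual i5) i8 i6 (dual i9) = 1 /\
      (N i4 i7 i0 = 1 /\ N (dual i5) i8 i0 = 1 /\ N i6 (dual i9) i0 = 1) /\
      N i2 i1 i3 = 0 /\
      [\/ sum2 N i5 i4 i8 (dual i7) = 1,
          sum2 N i2 (dual i4) i8 (dual i0) = 1 |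
          sum2 N (dual i5) i2 i0 (dual i7) = 1] /\
      [\/ sum2 N i5 i0 i3 (dual i9) = 1,
          sum2 N i8 (dual i0) i3 (dual i6) = 1 |
          sum2 N (dual i5) i8 i6 (dual i9) = 1] /\
      [\/ sum2 N i4 i7 i6 (dual i9) = 1,
          sum2 N i0 (dual i7) i6 (dual i1) = 1 |
          sum2 N (dual i4) i0 i1 (dual i9) = 1].

Definition passes_one_spectrum r (N : 'I_r -> 'I_r -> 'I_r -> nat)
    (dual : 'I_r -> 'I_r) : Prop :=
  ~ exists i0 i1 i2 i3 i4 i5 i6 i7 i8 i9 : 'I_r,
      one_spectrum_witness N dual i0 i1 i2 i3 i4 i5 i6 i7 i8 i9.

(* Main.v *)
Require Import Defs.
From mathcomp Require Import all_boot.
From mathcomp Require Import zify.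

Lemma sum_ge2 r (F : 'I_r -> nat) (k0 k1 : 'I_r) :
  k0 != k1 -> 0 < F k0 -> 0 < F k1 -> 2 <= \sum_(k < r) F k.
Proof.
move=> hk h0 h1; rewrite (bigD1 k0) //= (bigD1 k1) /=; last by rewrite eq_sym.
lia.
Qed.

Theorem lemma7p19 (r : nat) (N : 'I_r -> 'I_r -> 'I_r -> nat)
    (one : 'I_r) (dual : 'I_r -> 'I_r) :
  is_fusion_ring N one dual ->
  (exists k0 k1 : 'I_r, k0 <> k1 /\
     forall i j : 'I_r, i <> one -> j <> one ->
       N i j k0 <> 0 /\ N i j k1 <> 0) ->
  passes_one_spectrum N dual.
Proof.
move=> [_ Hu Hd Hf] [k0 [k1 [Hk Hne]]].
move=> [i0 [i1 [i2 [i3 [i4 [i5 [i6 [i7 [i8 [i9 W]]]]]]]]]].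
move: W => [[A1 [A2 [A3 [A4 [A5 A6]]]]] [H2 [_ [H4 _]]]].
have Ul : forall i j, N one i j <> 0 -> i = j.
  by move=> i j; rewrite (proj1 (Hu i j)); case: eqP.
have Ur : forall i j, N i one j <> 0 -> i = j.
  by move=> i j; rewrite (proj2 (Hu i j)); case: eqP.
have Dl : forall i k, N i k one <> 0 -> k = dual i.
  by move=> i k; rewrite (proj1 (Hd i k)); case: eqP.
have DD : forall i, dual (dual i) = i.
  move=> i; apply/eqP.
  have := proj2 (Hd i (dual i)); rewrite eqxx.
  by rewrite (proj1 (Hd (dual i) i)); case: (dual (dual i) == i).
have D1 : dual one = one.
  have := proj1 (Hd one one); rewrite (proj1 (Hu one one)) eqxx.
  by case: eqP.
have Dn : forall i, i <> one -> dual i <> one.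
  by move=> i hi e; apply: hi; rewrite -(DD i) e D1.
have [e4|n4] := eqVneq i4 one.
  subst i4; have e1 := Ul _ _ A1; have e2 := Ur _ _ A2; subst.
  by apply: A3.
have [e5|n5] := eqVneq i5 one.
  subst i5; have e1 := Ul _ _ A2; have e2 := Ul _ _ A3; subst.
  by apply: A1.
have [e6|n6] := eqVneq i6 one.
  subst i6; have e1 := Dl _ _ A1; have e2 := Ur _ _ A3; subst.
  by move: H4; rewrite -(proj2 (Hf _ _ _)).
have [e7|n7] := eqVneq i7 one.
  subst i7; have e1 := Ul _ _ A4; have e2 := Ur _ _ A5; subst.
  by apply: A6.
have [e9|n9] := eqVneq i9 one.
  subst i9; have e1 := Ur _ _ A4; have e2 := Ur _ _ A6; subst.
  by apply: A5.
have [e8|n8] := eqVneq i8 one.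
  subst i8; have e1 := Dl _ _ A5; have e2 := Ul _ _ A6; subst.
  by move: H4; rewrite (proj1 (Hf _ _ _)).
have : 2 <= sum3 N i4 i7 (dual i5) i8 i6 (dual i9).
  apply: (@sum_ge2 _ _ k0 k1); first by apply/eqP.
  - have n4' : i4 <> one by apply/eqP.
    have n7' : i7 <> one by apply/eqP.
    have n5' : dual i5 <> one by apply: Dn; apply/eqP.
    have n8' : i8 <> one by apply/eqP.
    have n6' : i6 <> one by apply/eqP.
    have n9' : dual i9 <> one by apply: Dn; apply/eqP.
    have := Hne _ _ n4' n7'; have := Hne _ _ n5' n8'; have := Hne _ _ n6' n9'.
    rewrite !muln_gt0 /=; lia.
  - have n4' : i4 <> one by apply/eqP.
    have n7' : i7 <> one by apply/eqP.
    have n5' : dual i5 <> one by apply: Dn; apply/eqP.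
    have n8' : i8 <> one by apply/eqP.
    have n6' : i6 <> one by apply/eqP.
    have n9' : dual i9 <> one by apply: Dn; apply/eqP.
    have := Hne _ _ n4' n7'; have := Hne _ _ n5' n8'; have := Hne _ _ n6' n9'.
    rewrite !muln_gt0 /=; lia.
by rewrite H2.
Qed.
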